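(* Let $r\ge4$ and $s\ge1$ be integers and consider the lexicographic product $C_r[K_s]$. If $H$ is a connected induced regular subgraph of $C_r[K_s]$ of degree $d$, then either (i) $H$ is a clique of order $d+1$, with $0\le d\le 2s-1$; or (ii) $r(d+1)/3$ is an integer, $2\le d\le 3s-1$, $H$ has order $r(d+1)/3$, and every vertex of $C_r[K_s]$ is adjacent to some vertex of $H$. Conversely, for every $d$ with $0\le d\le 2s-1$ there is a connected induced regular subgraph of degree $d$ of type (i), and for every $d$ with $2\le d\le 3s-1$ such that $r(d+1)/3$ is an integer there is a connected induced regular subgraph of degree $d$ of type (ii).
   Context: Graphs are finite and simple. $C_r$ is the cycle on $r$ vertices and $K_s$ the complete graph on $s$ vertices. The lexicographic product $G[H]$ has vertex set $V(G)\times V(H)$, with $(a,b)$ adjacent to $(a',b')$ iff $a$ is adjacent to $a'$ in $G$, or $a=a'$ and $b$ is adjacent to $b'$ in $H$. Thus $C_r[K_s]$ consists of $r$ cliques of order $s$ arranged cyclically, with all edges between cyclically consecutive cliques. A regular subgraph of degree $d$ is one in which every vertex has exactly $d$ neighbours in the subgraph. *)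

(* Defs.v *)
From mathcomp Require Import all_boot.
Set Implicit Arguments. Unset Strict Implicit. Unset Printing Implicit Defensive.

(* Vertices of C_r[K_s]: pairs (a, b) with a : 'I_r (position on the cycle)
   and b : 'I_s (position in the clique). *)
Definition lexV (r s : nat) := ('I_r * 'I_s)%type.

Definition cyc_adj (r : nat) (a a' : 'I_r) : bool :=
  ((a.+1 %% r) == a') || ((a'.+1 %% r) == a).

Definition lex_adj (r s : nat) : rel (lexV r s) :=
  fun x y => cyc_adj x.1 y.1 || ((x.1 == y.1) && (x.2 != y.2)).

Section Sub.
Variables (T : finType) (e : rel T).

Definition induced_regular (S : {set T}) (d : nat) : Prop :=
  forall v, v \in S -> #|[set w in S | e v w]| = d.

Definition induced_connected (S : {set T}) : Prop :=
  S != set0 /\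
  {in S &, forall u v, connect (fun x y => [&& x \in S, y \in S & e x y]) u v}.

Definition is_clique (S : {set T}) : Prop :=
  {in S &, forall u v, u != v -> e u v}.

Definition every_vertex_adjacent (S : {set T}) : Prop :=
  forall v, exists2 w, w \in S & e v w.
End Sub.

(* Main.v *)
Require Import Defs.
From mathcomp Require Import all_boot zify.
Set Implicit Arguments. Unset Strict Implicit. Unset Printing Implicit Defensive.

Section Lex.
Variables (r s : nat).
Hypothesis hr : 4 <= r.
Hypothesis hs : 1 <= s.

Lemma rpos : 0 < r. Proof. exact: leq_trans hr. Qed.

Definition lay (k : nat) : 'I_r := Ordinal (ltn_pmod k rpos).

Lemma lay_val (a : 'I_r) : lay a = a.
Proof. by apply: val_inj; rewrite /= modn_small. Qed.

Lemma lay_eq k l : (lay k == lay l) = (k == l %[mod r]).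
Proof. by rewrite -val_eqE. Qed.

Lemma lay_neq k i : 0 < i < r -> lay (k + i) != lay k.
Proof.
move=> /andP[i0 ir]; rewrite lay_eq -[X in _ == X %[mod _]]addn0 eqn_modDl.
by rewrite mod0n modn_small // -lt0n.
Qed.

Lemma lay_S k l : (lay k.+1 == lay l.+1) = (lay k == lay l).
Proof. by rewrite !lay_eq -[k.+1]addn1 -[l.+1]addn1 eqn_modDr. Qed.

Lemma cyc_lay k a : cyc_adj (lay k.+1) a = (a == lay k) || (a == lay k.+2).
Proof.
rewrite /cyc_adj orbC; congr (_ || _).
  by rewrite -val_eqE /= -[a.+1]addn1 -[k.+1]addn1 eqn_modDr modn_small.
by rewrite eq_sym -val_eqE /= -[(k.+1 %% r).+1]addn1 modnDml addn1.
Qed.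

Lemma lay_pred (a : 'I_r) : lay (a + r.-1).+1 = a.
Proof.
by rewrite -addnS prednK ?rpos // -(lay_val a) lay_val; apply: val_inj; rewrite /= modnDr modn_small.
Qed.

Lemma lex_adj_sym : symmetric (@lex_adj r s).
Proof.
move=> x y; rewrite /lex_adj /cyc_adj (eq_sym x.1) (eq_sym x.2).
by case: (_ == _); case: (_ == _); rewrite ?orbT.
Qed.

Lemma lay_d1 k : lay k.+1 != lay k. Proof. by rewrite -addn1 lay_neq // (leq_trans _ hr). Qed.
Lemma lay_d2 k : lay k.+2 != lay k. Proof. by rewrite -addn2 lay_neq // (leq_trans _ hr). Qed.
Lemma lay_d3 k : lay k.+2 != lay k.+1. Proof. exact: lay_d1. Qed.

Lemma lex_irr v : @lex_adj r s v v = false.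
Proof.
rewrite /lex_adj !eqxx /= orbF.
set k := (v.1 + r.-1).
have := lay_pred v.1; rewrite -/k => e; rewrite -e cyc_lay.
by rewrite (negbTE (lay_d1 _)) eq_sym (negbTE (lay_d3 _)).
Qed.

Definition nS (S : {set lexV r s}) (i : 'I_r) := #|[set v in S | v.1 == i]|.

Lemma sumb (S : {set lexV r s}) (P : pred (lexV r s)) :
  \sum_(w in S) (P w : nat) = #|[set w in S | P w]|.
Proof.
rewrite -sum1_card [RHS](eq_bigl (fun w => (w \in S) && P w)); last by move=> w; rewrite inE.
by rewrite [RHS]big_mkcondr /=; apply: eq_bigr => w _; case: (P w).
Qed.


Lemma deg (S : {set lexV r s}) v k : v \in S -> v.1 = lay k.+1 ->
  #|[set w in S | lex_adj v w]|.+1 = nS S (lay k) + nS S (lay k.+1) + nS S (lay k.+2).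
Proof.
move=> vS vk.
have h1 : \sum_(w in S) ((w == v) : nat) = 1.
  rewrite sumb (_ : [set w in S | w == v] = [set v]) ?cards1 //.
  by apply/setP => w; rewrite !inE; case: (eqVneq w v) => [->|]; rewrite ?vS ?andbF.
rewrite /nS -!sumb -addn1 -h1 -!big_split /=; apply: eq_bigr => w _.
clear h1; case: v vS vk => a b vS /= ->; case: w => a' b' /=.
rewrite /lex_adj /= cyc_lay xpair_eqE.
have e1 := negbTE (lay_d1 k); have e2 := negbTE (lay_d2 k); have e3 := negbTE (lay_d3 k).
have e1' : (lay k == lay k.+1) = false by rewrite eq_sym.
have e2' : (lay k == lay k.+2) = false by rewrite eq_sym.
have e3' : (lay k.+1 == lay k.+2) = false by rewrite eq_sym.
have [->|n1] := eqVneq a' (lay k); first by rewrite ?eqxx ?e1 ?e2 ?e3 ?e1' ?e2' ?e3'.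
have [->|n2] := eqVneq a' (lay k.+2); first by rewrite ?eqxx ?e1 ?e2 ?e3 ?e1' ?e2' ?e3'.
have [_|n3] := eqVneq a' (lay k.+1).
  by rewrite ?eqxx ?e1 ?e2 ?e3 ?e1' ?e2' ?e3' /=; by have [_|_] := eqVneq b' b.
by [].
Qed.

Lemma n_le_s (S : {set lexV r s}) i : nS S i <= s.
Proof.
apply: (@leq_trans #|(pair i) @: [set: 'I_s]|).
  apply: subset_leq_card; apply/subsetP => v; rewrite inE => /andP[_ /eqP <-].
  by apply/imsetP; exists v.2; rewrite ?inE //; case: v.
by rewrite (leq_trans (leq_imset_card _ _)) // cardsT card_ord.
Qed.

Lemma n_pos (S : {set lexV r s}) i : 0 < nS S i -> exists2 v, v \in S & v.1 = i.
Proof. by move/card_gt0P => [v]; rewrite inE => /andP[vS /eqP e]; exists v. Qed.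

Lemma n_zero (S : {set lexV r s}) i v : nS S i = 0 -> v \in S -> v.1 != i.
Proof.
move=> h vS; apply/negP => /eqP e.
have : 0 < nS S i by apply/card_gt0P; exists v; rewrite inE vS e eqxx.
by rewrite h.
Qed.

Lemma cardS_sum (S : {set lexV r s}) : #|S| = \sum_(i < r) nS S i.
Proof.
rewrite -sum1_card (partition_big (fun v : lexV r s => v.1) predT) //=.
apply: eq_bigr => i _; rewrite /nS -sum1_card; apply: eq_bigl => v; by rewrite inE.
Qed.

Lemma sum_lay (S : {set lexV r s}) c : \sum_(i < r) nS S (lay (i + c)) = \sum_(i < r) nS S i.
Proof.
have inj : injective (fun i : 'I_r => lay (i + c)).
  move=> i j /eqP; rewrite lay_eq eqn_modDr !modn_small // => /eqP; exact: val_inj.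
by rewrite [RHS](reindex_inj inj).
Qed.

Lemma caseA (S : {set lexV r s}) d :
  induced_regular (@lex_adj r s) S d -> (forall i, 0 < nS S i) ->
  (3 %| r * d.+1 /\ 2 <= d /\ d.+1 <= 3 * s /\
       #|S| = r * d.+1 %/ 3 /\ every_vertex_adjacent (@lex_adj r s) S).
Proof.
move=> reg pos.
have tri k : nS S (lay k) + nS S (lay k.+1) + nS S (lay k.+2) = d.+1.
  have [v vS vk] := n_pos (pos (lay k.+1)).
  by rewrite -(deg vS vk) reg.
have h3 : 3 * #|S| = r * d.+1.
  have : \sum_(i < r) (nS S (lay (i + r.-1)) + nS S (lay (i + r.-1.+1)) + nS S (lay (i + r.-1.+2)))
     = \sum_(i < r) d.+1 by apply: eq_bigr => i _; rewrite !addnS; exact: tri.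
  rewrite !big_split /= !sum_lay sum_nat_const card_ord => <-.
  by rewrite -cardS_sum !mulSn mul0n addn0 addnA.
have t0 := tri 0; have p0 := pos (lay 0); have p1 := pos (lay 1); have p2 := pos (lay 2).
have q0 := n_le_s S (lay 0); have q1 := n_le_s S (lay 1); have q2 := n_le_s S (lay 2).
split; first by rewrite -h3 dvdn_mulr.
split; first lia.
split; first lia.
split; first by rewrite -h3 mulKn.
move=> v; set k := v.1 + r.-1.
have [w wS wk] := n_pos (pos (lay k.+2)).
exists w => //; rewrite /lex_adj -(lay_pred v.1) -/k cyc_lay wk eqxx orbT //.
Qed.

Lemma clique_card (S : {set lexV r s}) v : is_clique (@lex_adj r s) S -> v \in S ->
  #|[set w in S | lex_adj v w]|.+1 = #|S|.
Proof.
move=> cl vS; rewrite (cardsD1 v S) vS add1n; congr (_.+1); apply: eq_card => w.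
rewrite !inE; case: (eqVneq w v) => [->|ne]; first by rewrite lex_irr andbF.
case wS: (w \in S) => //=; apply: cl => //; by rewrite eq_sym.
Qed.

Lemma block_clique (S : {set lexV r s}) j :
  (forall v, v \in S -> (v.1 == lay j.+1) || (v.1 == lay j.+2)) ->
  is_clique (@lex_adj r s) S.
Proof.
move=> blk u w uS wS ne; rewrite /lex_adj.
case: (eqVneq u.1 w.1) => [e|ne1].
  apply/orP; right.
  by apply: contra ne => /eqP e2; apply/eqP; rewrite [u]surjective_pairing [w]surjective_pairing e e2.
have := blk u uS; have := blk w wS.
case/orP => /eqP ew; case/orP => /eqP eu; rewrite ?ew ?eu in ne1 *.
- by rewrite eqxx in ne1.
- by rewrite cyc_lay eqxx ?orbT.
- by rewrite cyc_lay eqxx ?orbT.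
- by rewrite eqxx in ne1.
Qed.

Lemma caseB (S : {set lexV r s}) d i0 :
  induced_connected (@lex_adj r s) S -> induced_regular (@lex_adj r s) S d ->
  nS S i0 = 0 ->
  (is_clique (@lex_adj r s) S /\ #|S| = d.+1 /\ d.+1 <= 2 * s).
Proof.
move=> [ne conn] reg z.
have [v0 v0S] := set0Pn _ ne.
pose P k := 0 < nS S (lay (i0 + k)).
have exP : exists k, P k.
  exists (v0.1 + r - i0); rewrite /P subnKC; last by rewrite (leq_trans (ltnW (ltn_ord i0))) // leq_addl.
  have -> : lay (v0.1 + r) = v0.1 by apply: val_inj; rewrite /= modnDr modn_small.
  by apply/card_gt0P; exists v0; rewrite inE v0S eqxx.
case: (ex_minnP exP) => k Pk minP.
case: k Pk minP => [|k'] Pk minP.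
  by move: Pk; rewrite /P addn0 lay_val z.
have Pk' : nS S (lay (i0 + k')) = 0.
  apply/eqP; rewrite -leqn0 leqNgt; apply/negP => h.
  by have := minP _ h; rewrite ltnn.
set j := i0 + k' in Pk'.
have n1 : 0 < nS S (lay j.+1) by move: Pk; rewrite /P addnS.
have [v vS vj] := n_pos n1.
have dv := deg vS vj; rewrite reg // Pk' add0n in dv.
have B3 : 0 < nS S (lay j.+2) -> nS S (lay j.+3) = 0.
  move=> h2; have [w wS wj] := n_pos h2.
  have := deg wS wj; rewrite reg //; lia.
pose B := [set w in S | (w.1 == lay j.+1) || (w.1 == lay j.+2)].
have clos w u : w \in B -> u \in S -> lex_adj w u -> u \in B.
  rewrite !inE => /andP[wS wB] uS; rewrite uS /= /lex_adj.
  case/orP: (wB) => /eqP wj2; rewrite wj2.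
    rewrite cyc_lay; case/orP; first case/orP.
    - by move/eqP => e; move: (n_zero Pk' uS); rewrite e eqxx.
    - by move=> ->; rewrite orbT.
    - by case/andP => /eqP <-; rewrite eqxx.
  rewrite cyc_lay; case/orP; first case/orP.
  - by move=> ->.
  - move/eqP => e; have h2 : 0 < nS S (lay j.+2).
      by apply/card_gt0P; exists w; rewrite inE wS wj2 eqxx.
    by move: (n_zero (B3 h2) uS); rewrite e eqxx.
  - by case/andP => /eqP <-; rewrite eqxx orbT.
have vB : v \in B by rewrite inE vS vj eqxx.
have cl : closed (fun x y => [&& x \in S, y \in S & lex_adj x y]) B.
  move=> x y /and3P[xS yS xy]; apply/idP/idP => [xB|yB].
    exact: clos xB yS xy.
  by apply: clos yB xS _; rewrite lex_adj_sym.
have SB u : u \in S -> u \in B.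
  by move=> uS; rewrite -(closed_connect cl (conn _ _ vS uS)).
have cl2 : is_clique (@lex_adj r s) S.
  by apply: (@block_clique S j) => u /SB; rewrite inE => /andP[].
split=> //; split; first by rewrite -(clique_card cl2 vS) reg.
have := n_le_s S (lay j.+1); have := n_le_s S (lay j.+2); lia.
Qed.

Lemma card_ltn m : m <= s -> #|[set b : 'I_s | b < m]| = m.
Proof.
move=> ms.
have -> : [set b : 'I_s | b < m] = (widen_ord ms) @: [set: 'I_m].
  apply/setP => b; rewrite inE; apply/idP/imsetP => [bm|[x _ ->]]; last exact: (ltn_ord x).
  by exists (Ordinal bm); rewrite ?inE //; apply: val_inj.
by rewrite card_imset ?cardsT ?card_ord // => x y /(congr1 val) /= e; apply: val_inj.
Qed.

Definition Sf (f : 'I_r -> nat) := [set v : lexV r s | v.2 < f v.1].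

Lemma nf f i : (forall i, f i <= s) -> nS (Sf f) i = f i.
Proof.
move=> fs; have inj : injective (pair i : 'I_s -> lexV r s) by move=> x y [].
rewrite /nS -[RHS](card_ltn (fs i)) -(card_imset _ inj).
apply: eq_card => v; rewrite !inE; apply/idP/imsetP => [/andP[vf /eqP vi]|[b]].
  by exists v.2; rewrite ?inE -?vi //; case: v {vf vi}.
by rewrite inE => bf ->; rewrite /= bf eqxx.
Qed.

Lemma regf f d : (forall i, f i <= s) ->
  (forall k, 0 < f (lay k.+1) -> f (lay k) + f (lay k.+1) + f (lay k.+2) = d.+1) ->
  induced_regular (@lex_adj r s) (Sf f) d.
Proof.
move=> fs tri v vS; set k := v.1 + r.-1.
have vk : v.1 = lay k.+1 by rewrite lay_pred.
have := deg vS vk; rewrite !nf // tri; first by move=> [].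
by move: vS; rewrite inE -vk => h; exact: (leq_ltn_trans (leq0n _) h).
Qed.

Lemma connf f : (forall i, 0 < f i) -> induced_connected (@lex_adj r s) (Sf f).
Proof.
move=> fp.
pose R := (fun x y => [&& x \in Sf f, y \in Sf f & @lex_adj r s x y]).
pose b0 : 'I_s := Ordinal hs.
have inS i : (i, b0) \in Sf f by rewrite inE /= fp.
have z0 : forall m u, u \in Sf f -> u.1 = lay m -> connect R u (lay 0, b0).
  elim=> [|m IH] u uS um.
    case: (eqVneq u (lay 0, b0)) => [->|ne]; first exact: connect0.
    apply: connect1; rewrite /R uS inS /lex_adj um eqxx /=; apply/orP; right.
    by apply: contra ne => /eqP e2; apply/eqP; rewrite [u]surjective_pairing um e2.
  apply: connect_trans (IH (lay m, b0) (inS _) erefl).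
  by apply: connect1; rewrite /R uS inS /lex_adj um cyc_lay eqxx.
split; first by apply/set0Pn; exists (lay 0, b0).
move=> u w uS wS.
have symR : connect_sym R.
  apply: sym_connect_sym => x y; rewrite /R lex_adj_sym.
  by case: (x \in Sf f); case: (y \in Sf f).
have := z0 _ _ uS (esym (lay_val u.1)); have := z0 _ _ wS (esym (lay_val w.1)).
by rewrite symR => h1 h2; apply: connect_trans h2 h1.
Qed.

Lemma arith1 d x y z : 3 %| d.+1 ->
  (d.+3 - x %% 3) %/ 3 + (d.+3 - y %% 3) %/ 3 + (d.+3 - z %% 3) %/ 3 = d.+1.
Proof. lia. Qed.

Lemma arith2 d k :
  (d.+3 - k %% 3) %/ 3 + (d.+3 - k.+1 %% 3) %/ 3 + (d.+3 - k.+2 %% 3) %/ 3 = d.+1.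
Proof. lia. Qed.

Lemma main_in :
  (forall (S : {set lexV r s}) (d : nat),
      induced_connected (@lex_adj r s) S ->
      induced_regular (@lex_adj r s) S d ->
      (is_clique (@lex_adj r s) S /\ #|S| = d.+1 /\ d.+1 <= 2 * s)
      \/
      (3 %| r * d.+1 /\ 2 <= d /\ d.+1 <= 3 * s /\
       #|S| = r * d.+1 %/ 3 /\ every_vertex_adjacent (@lex_adj r s) S))
  /\
  (forall d : nat, d.+1 <= 2 * s ->
      exists S : {set lexV r s},
        [/\ induced_connected (@lex_adj r s) S,
            induced_regular (@lex_adj r s) S d,
            is_clique (@lex_adj r s) S & #|S| = d.+1])
  /\
  (forall d : nat, 2 <= d -> d.+1 <= 3 * s -> 3 %| r * d.+1 ->
      exists S : {set lexV r s},
        [/\ induced_connected (@lex_adj r s) S,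
            induced_regular (@lex_adj r s) S d,
            #|S| = r * d.+1 %/ 3
          & every_vertex_adjacent (@lex_adj r s) S]).
Proof.
split.
  move=> S d conn reg.
  case: (boolP [forall i, 0 < nS S i]) => [/forallP pos | /forallPn [i0]].
    by right; exact: caseA reg pos.
  by rewrite -eqn0Ngt => /eqP z; left; exact: caseB conn reg z.
split.
  move=> d hd.
  pose f := fun i : 'I_r => if i == lay 1 then minn d.+1 s
                            else if i == lay 2 then d.+1 - minn d.+1 s else 0.
  have fs i : f i <= s by rewrite /f; case: ifP => _; [|case: ifP => _]; lia.
  have e01 : (lay 0 == lay 1) = false by rewrite eq_sym (negbTE (lay_d1 0)).
  have e02 : (lay 0 == lay 2) = false by rewrite eq_sym (negbTE (lay_d2 0)).
  have e21 : (lay 2 == lay 1) = false by rewrite (negbTE (lay_d3 0)).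
  have e31 : (lay 3 == lay 1) = false by rewrite (negbTE (lay_d2 1)).
  have e32 : (lay 3 == lay 2) = false by rewrite (negbTE (lay_d1 2)).
  have tri k : 0 < f (lay k.+1) -> f (lay k) + f (lay k.+1) + f (lay k.+2) = d.+1.
    case: (eqVneq (lay k.+1) (lay 1)) => [e1|n1].
      have e0 : lay k = lay 0 by apply/eqP; rewrite -lay_S e1.
      have e2 : lay k.+2 = lay 2 by apply/eqP; rewrite lay_S e1.
      rewrite e0 e1 e2 /f e01 e02 e21 !eqxx /=; lia.
    case: (eqVneq (lay k.+1) (lay 2)) => [e1|n2].
      have e0 : lay k = lay 1 by apply/eqP; rewrite -lay_S e1.
      have e2 : lay k.+2 = lay 3 by apply/eqP; rewrite lay_S e1.
      rewrite e0 e1 e2 /f e31 e32 e21 !eqxx /=; lia.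
    by rewrite /f (negbTE n1) (negbTE n2).
  have cl : is_clique (@lex_adj r s) (Sf f).
    apply: (@block_clique _ 0) => v; rewrite inE /f.
    by case: (v.1 == lay 1) => //; case: (v.1 == lay 2).
  have v0S : (lay 1, Ordinal hs) \in Sf f by rewrite inE /f eqxx /=; lia.
  exists (Sf f); split.
  - split; first by apply/set0Pn; exists (lay 1, Ordinal hs).
    move=> u w uS wS; case: (eqVneq u w) => [->|ne]; first exact: connect0.
    by apply: connect1; rewrite uS wS cl.
  - exact: regf fs tri.
  - exact: cl.
  - by rewrite -(clique_card cl v0S) (regf fs tri).
move=> d hd2 hd3 hdiv.
pose f := fun i : 'I_r => (d.+3 - i %% 3) %/ 3.
have fp i : 0 < f i by rewrite /f; lia.
have fs i : f i <= s by rewrite /f; lia.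
have tri k : 0 < f (lay k.+1) -> f (lay k) + f (lay k.+1) + f (lay k.+2) = d.+1.
  move=> _; case: (boolP (3 %| d.+1)) => h3; first exact: arith1.
  have r3 : 3 %| r by move: hdiv; rewrite Euclid_dvdM // (negbTE h3) orbF.
  rewrite /f /= !(modn_dvdm _ r3); exact: arith2.
have reg := regf fs tri.
have pos i : 0 < nS (Sf f) i by rewrite nf.
have [_ [_ [_ [c e]]]] := caseA reg pos.
by exists (Sf f); split=> //; exact: connf.
Qed.

End Lex.

Theorem lemma6 (r s : nat) (hr : 4 <= r) (hs : 1 <= s) :
  (forall (S : {set lexV r s}) (d : nat),
      induced_connected (@lex_adj r s) S ->
      induced_regular (@lex_adj r s) S d ->
      (is_clique (@lex_adj r s) S /\ #|S| = d.+1 /\ d.+1 <= 2 * s)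
      \/
      (3 %| r * d.+1 /\ 2 <= d /\ d.+1 <= 3 * s /\
       #|S| = r * d.+1 %/ 3 /\ every_vertex_adjacent (@lex_adj r s) S))
  /\
  (forall d : nat, d.+1 <= 2 * s ->
      exists S : {set lexV r s},
        [/\ induced_connected (@lex_adj r s) S,
            induced_regular (@lex_adj r s) S d,
            is_clique (@lex_adj r s) S & #|S| = d.+1])
  /\
  (forall d : nat, 2 <= d -> d.+1 <= 3 * s -> 3 %| r * d.+1 ->
      exists S : {set lexV r s},
        [/\ induced_connected (@lex_adj r s) S,
            induced_regular (@lex_adj r s) S d,
            #|S| = r * d.+1 %/ 3
          & every_vertex_adjacent (@lex_adj r s) S]).
Proof. exact: (main_in hr hs). Qed.
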